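(* Let $2\le i\le n/3$, let $\alpha,\beta$ be conjugacy classes of $S_n$ with $a_j=b_j$ for $j<i$ and $a_i\ne b_i$, and for $0\le k\le i-1$ put $r_k=1-\frac{i(n-i+k+1)}{\binom n2}$. If $t\ge \frac{n^2(\log(i-1)+1)}{i}$, then $\Big|(a_i-b_i)\binom ni\sum_{k=1}^{i-1}(-1)^k\binom{i-1}{k}\frac{n-2i+k+1}{n-i+k+1}r_k^t\Big|\le\frac12\,|a_i-b_i|\binom ni\frac{n-2i+1}{n-i+1}r_0^t.$ That is, the combined contribution of the partitions $[n-i,i-k,1^k]$, $1\le k\le i-1$, to the Fourier expansion of $P^{*t}(\alpha)-P^{*t}(\beta)$ for the random transposition walk is at most half, in absolute value, of the contribution of $[n-i,i]$.
   Context: $\log$ is the natural logarithm. $a_j$ (resp. $b_j$) is the number of $j$-cycles of the class $\alpha$ (resp. $\beta$). The random transposition walk on $S_n$ starts at the identity and at each step multiplies by a uniformly random transposition; $P^{*t}(\alpha)$ is the probability of any fixed element of class $\alpha$ after $t$ steps, and $P^{*t}(\alpha)-P^{*t}(\beta)=\frac1{n!}\sum_\lambda(\chi_\lambda(\alpha)-\chi_\lambda(\beta))d_\lambda\big(\chi_\lambda(\tau)/d_\lambda\big)^t$. *)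

(* Defs.v *)
From Stdlib Require Import Reals Lra Lia.
Open Scope R_scope.

Fixpoint wsum (a : nat -> nat) (m : nat) : nat :=
  match m with
  | O => O
  | S m' => (wsum a m' + S m' * a (S m'))%nat
  end.

(* A conjugacy class of S_n, encoded by its cycle type: a j = number of
   j-cycles, with sum_j j a_j = n and a_j = 0 outside 1..n. *)
Definition is_cycle_type (n : nat) (a : nat -> nat) : Prop :=
  wsum a n = n /\ (forall j : nat, (j = 0 \/ n < j)%nat -> a j = 0%nat).

Definition rk (n i k : nat) : R :=
  1 - INR i * (INR n - INR i + INR k + 1) / C n 2.

(* Main.v *)
Require Import Defs.
From Stdlib Require Import Reals Lra Lia.
Open Scope R_scope.

Lemma my_exp_ge (x : R) : 1 + x <= exp x.
Proof.
  destruct (Req_dec x 0) as [->|H].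
  - rewrite exp_0; lra.
  - left; now apply exp_ineq1.
Qed.

Lemma my_exp_le (x y : R) : x <= y -> exp x <= exp y.
Proof.
  intros [H|H]; [left; now apply exp_increasing | subst; lra].
Qed.

Lemma my_exp_pow (x : R) (t : nat) : exp x ^ t = exp (INR t * x).
Proof.
  induction t as [|t IH].
  - simpl. rewrite Rmult_0_l, exp_0; reflexivity.
  - rewrite <- tech_pow_Rmult, IH, <- exp_plus, S_INR. f_equal; ring.
Qed.

Lemma fact_le_pow (m k : nat) : (k <= m)%nat ->
  (Factorial.fact m <= m ^ k * Factorial.fact (m - k))%nat.
Proof.
  induction k as [|k IH]; intros Hk.
  - rewrite Nat.sub_0_r; simpl; lia.
  - assert (Hf : Factorial.fact (m - k) = ((m - k) * Factorial.fact (m - S k))%nat).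
    { replace (m - k)%nat with (S (m - S k)) by lia. simpl. 
      replace (m - S k)%nat with (m - S k)%nat by lia. lia. }
    specialize (IH ltac:(lia)). rewrite Hf in IH. simpl.
    assert ((m - k) * Factorial.fact (m - S k) <= m * Factorial.fact (m - S k))%nat
      by (apply Nat.mul_le_mono_r; lia).
    nia.
Qed.

Lemma C_nonneg (m k : nat) : 0 <= C m k.
Proof.
  unfold C. apply Rmult_le_pos; [apply pos_INR|].
  left; apply Rinv_0_lt_compat, Rmult_lt_0_compat;
  apply lt_0_INR, Factorial.lt_O_fact.
Qed.

Lemma C_le_pow (m k : nat) : (k <= m)%nat -> C m k <= INR m ^ k.
Proof.
  intros Hk. unfold C.
  pose proof (fact_le_pow m k Hk) as H.
  apply le_INR in H. rewrite mult_INR, pow_INR in H.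
  assert (H1 : 1 <= INR (Factorial.fact k)).
  { apply (le_INR 1). pose proof (Factorial.lt_O_fact k). lia. }
  assert (H2 : 0 < INR (Factorial.fact (m - k))) by apply lt_0_INR, Factorial.lt_O_fact.
  apply Rmult_le_reg_r with (INR (Factorial.fact k) * INR (Factorial.fact (m - k))).
  { apply Rmult_lt_0_compat; lra. }
  unfold Rdiv. rewrite Rmult_assoc, Rinv_l, Rmult_1_r.
  2:{ apply Rgt_not_eq, Rmult_lt_0_compat; lra. }
  apply Rle_trans with (INR m ^ k * INR (Factorial.fact (m - k))); [exact H|].
  assert (0 <= INR m ^ k) by (apply pow_le, pos_INR).
  assert (0 <= INR m ^ k * INR (Factorial.fact (m - k))) by (apply Rmult_le_pos; lra).
  nra.
Qed.

Lemma C_n_2 (n : nat) : (2 <= n)%nat -> C n 2 = INR n * (INR n - 1) / 2.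
Proof.
  intros H. destruct n as [|[|p]]; try lia.
  unfold C. replace (S (S p) - 2)%nat with p by lia.
  change (Factorial.fact (S (S p))) with (S (S p) * (S p * Factorial.fact p))%nat.
  rewrite !mult_INR. simpl (Factorial.fact 2). rewrite !S_INR.
  assert (INR (Factorial.fact p) <> 0) by apply INR_fact_neq_0.
  simpl (INR 2). simpl (INR 1). idtac.
rewrite INR_0. field. auto.
Qed.

Lemma my_ln_nonneg (x : R) : 1 <= x -> 0 <= ln x.
Proof.
  intros [H|H].
  - rewrite <- ln_1. left; apply ln_increasing; lra.
  - subst; rewrite ln_1; lra.
Qed.

Lemma my_div_le_1 (a b : R) : 0 < b -> a <= b -> a / b <= 1.
Proof.
  intros Hb H. apply Rmult_le_reg_r with b; auto.
  unfold Rdiv; rewrite Rmult_assoc, Rinv_l by lra; lra.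
Qed.

Lemma my_le_div (a b c : R) : 0 < b -> c * b <= a -> c <= a / b.
Proof.
  intros Hb H. apply Rmult_le_reg_r with b; auto.
  unfold Rdiv; rewrite Rmult_assoc, Rinv_l by lra; lra.
Qed.

Theorem lemma5p7 (n i : nat) (a b : nat -> nat) (t : nat) :
  (2 <= i)%nat -> (3 * i <= n)%nat ->
  is_cycle_type n a -> is_cycle_type n b ->
  (forall j : nat, (j < i)%nat -> a j = b j) ->
  a i <> b i ->
  INR t >= INR n ^ 2 * (ln (INR i - 1) + 1) / INR i ->
  Rabs ((INR (a i) - INR (b i)) * C n i *
        sum_f 1 (i - 1)
          (fun k => (-1) ^ k * C (i - 1) k *
                    ((INR n - 2 * INR i + INR k + 1) / (INR n - INR i + INR k + 1)) *
                    rk n i k ^ t))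
  <= / 2 * Rabs (INR (a i) - INR (b i)) * C n i *
     ((INR n - 2 * INR i + 1) / (INR n - INR i + 1)) * rk n i 0 ^ t.
Proof.
  intros Hi Hn _ _ _ _ Ht.
  assert (HI : 2 <= INR i) by (apply (le_INR 2) in Hi; simpl in Hi; lra).
  assert (HN : 3 * INR i <= INR n)
    by (apply le_INR in Hn; rewrite mult_INR in Hn; simpl in Hn; lra).
  assert (HD := C_n_2 n ltac:(lia)).
  assert (Hm : INR (i - 1) = INR i - 1) by (rewrite minus_INR by lia; simpl; ring).
  remember (INR n) as N eqn:HeqN. remember (INR i) as I eqn:HeqI.
  set (Dr := N*(N-1)/2 - I*(N-I+1)).
  assert (HDr : 0 < Dr) by (unfold Dr; nra).
  assert (HDr2 : Dr <= N^2/2) by (unfold Dr; nra).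
  assert (HD0 : 0 < N*(N-1)/2) by nra.
  assert (Hr0 : rk n i 0 = Dr / (N*(N-1)/2)).
  { unfold rk; rewrite HD, INR_0, <- HeqN, <- HeqI; unfold Dr; field; nra. }
  assert (Hr0p : 0 < rk n i 0) by (rewrite Hr0; apply Rdiv_lt_0_compat; lra).
  set (c := I / Dr).
  assert (Hc : 0 < c) by (unfold c; apply Rdiv_lt_0_compat; lra).
  assert (Hrk : forall k, rk n i k = rk n i 0 - I * INR k / (N*(N-1)/2)).
  { intro k; unfold rk; rewrite HD, INR_0, <- HeqN, <- HeqI; field; nra. }
  assert (Hrk0 : forall k, (k <= i-1)%nat -> 0 <= rk n i k).
  { intros k Hk. apply le_INR in Hk. rewrite Hm in Hk.
    unfold rk; rewrite HD, <- HeqN, <- HeqI.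
    assert (0 <= INR k) by apply pos_INR.
    assert (I*(N-I+INR k+1) <= N*(N-1)/2) by nra.
    assert (I*(N-I+INR k+1) / (N*(N-1)/2) <= 1) by (apply my_div_le_1; lra).
    lra. }
  assert (Hrkle : forall k, rk n i k <= rk n i 0 * exp (-(INR k * c))).
  { intro k. rewrite Hrk.
    pose proof (my_exp_ge (-(INR k * c))).
    assert (E : rk n i 0 * (1 + - (INR k * c)) = rk n i 0 - I * INR k / (N*(N-1)/2)).
    { rewrite Hr0; unfold c; field; split; nra. }
    rewrite <- E. apply Rmult_le_compat_l; lra. }
  set (E := exp (-(c * INR t))).
  assert (HE0 : 0 < E) by apply exp_pos.
  assert (Hpow : forall k, (k <= i-1)%nat -> rk n i k ^ t <= rk n i 0 ^ t * E ^ k).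
  { intros k Hk. apply Rle_trans with ((rk n i 0 * exp (-(INR k * c))) ^ t).
    - apply pow_incr; split; [apply Hrk0; auto | apply Hrkle].
    - rewrite Rpow_mult_distr. unfold E. rewrite !my_exp_pow.
      right; f_equal; f_equal; ring. }
  set (m := I - 1) in *.
  assert (Hm1 : 1 <= m) by (unfold m; lra).
  set (L := ln m) in *.
  assert (HL : 0 <= L) by (apply my_ln_nonneg; auto).
  assert (Hct : 2 * (L + 1) <= c * INR t).
  { assert (H1 : c * (N ^ 2 * (L + 1) / I) <= c * INR t)
      by (apply Rmult_le_compat_l; lra).
    assert (H2 : c * (N ^ 2 * (L + 1) / I) = N ^ 2 * (L + 1) / Dr)
      by (unfold c; field; split; lra).
    assert (H3 : N ^ 2 * (L + 1) / Dr - 2 * (L + 1) = (L+1) * (N^2 - 2 * Dr) / Dr)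
      by (field; lra).
    assert (H4 : 0 <= (L+1) * (N^2 - 2 * Dr) / Dr).
    { apply Rmult_le_pos; [apply Rmult_le_pos; lra | left; apply Rinv_0_lt_compat; lra]. }
    lra. }
  assert (He : 2 <= exp 1) by (pose proof (my_exp_ge 1); lra).
  assert (HE : E <= / (m * m * exp 1 * exp 1)).
  { apply Rle_trans with (exp (-(2 * (L + 1)))).
    - unfold E; apply my_exp_le; lra.
    - right. rewrite exp_Ropp. f_equal.
      replace (2 * (L + 1)) with (L + L + 1 + 1) by ring.
      rewrite !exp_plus. unfold L. rewrite exp_ln by lra. ring. }
  set (y := m * E).
  assert (Hy0 : 0 <= y) by (unfold y; nra).
  assert (Hy : m * y <= / 4).
  { unfold y.
    assert (/ (m * m * exp 1 * exp 1) <= / (4 * (m * m))).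
    { assert (4 <= exp 1 * exp 1) by nra. assert (0 < m * m) by nra.
      apply Rinv_le_contravar; [nra|].
      replace (m * m * exp 1 * exp 1) with ((m * m) * (exp 1 * exp 1)) by ring.
      nra. }
    assert (m * (m * E) <= m * (m * / (4 * (m * m)))).
    { apply Rmult_le_compat_l; [lra|]. apply Rmult_le_compat_l; lra. }
    replace (m * (m * / (4 * (m * m)))) with (/4) in H0 by (field; lra).
    lra. }
  assert (Hy1 : y <= 1) by (assert (0 <= (m - 1) * y) by (apply Rmult_le_pos; lra); nra).
  assert (HS : Rabs (sum_f 1 (i - 1)
          (fun k => (-1) ^ k * C (i - 1) k *
                    ((N - 2 * I + INR k + 1) / (N - I + INR k + 1)) *
                    rk n i k ^ t)) <= / 4 * rk n i 0 ^ t).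
  { unfold sum_f. eapply Rle_trans; [apply sum_f_R0_triangle|].
    eapply Rle_trans.
    - apply (sum_Rle _ (fun _ => rk n i 0 ^ t * y)).
      intros x Hx. cbv beta.
      set (k := (x + 1)%nat).
      assert (Hk : (k <= i - 1)%nat) by (unfold k; lia).
      assert (Hk0 : 0 <= INR k) by apply pos_INR.
      assert (HkI : INR k <= m) by (apply le_INR in Hk; rewrite Hm in Hk; exact Hk).
      rewrite !Rabs_mult, pow_1_abs.
      rewrite (Rabs_pos_eq (C _ _)) by apply C_nonneg.
      rewrite (Rabs_pos_eq (rk n i k ^ t)) by (apply pow_le, Hrk0; auto).
      assert (HF0 : 0 <= (N - 2 * I + INR k + 1) / (N - I + INR k + 1)).
      { apply Rmult_le_pos; [lra | left; apply Rinv_0_lt_compat; lra]. }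
      assert (HF1 : (N - 2 * I + INR k + 1) / (N - I + INR k + 1) <= 1)
        by (apply my_div_le_1; lra).
      rewrite (Rabs_pos_eq _ HF0).
      assert (HC := C_le_pow (i - 1) k Hk). rewrite Hm in HC.
      assert (HC0 := C_nonneg (i - 1) k).
      assert (HP := Hpow k Hk).
      assert (HP0 : 0 <= rk n i k ^ t) by (apply pow_le, Hrk0; auto).
      assert (Hr0t : 0 <= rk n i 0 ^ t) by (apply pow_le; lra).
      assert (HEk : 0 <= E ^ k) by (apply pow_le; lra).
      assert (Hmk : 0 <= m ^ k) by (apply pow_le; lra).
      apply Rle_trans with (1 * m ^ k * 1 * (rk n i 0 ^ t * E ^ k)).
      + apply Rmult_le_compat.
        * apply Rmult_le_pos; [apply Rmult_le_pos; lra | lra].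
        * exact HP0.
        * apply Rmult_le_compat; [apply Rmult_le_pos; lra | lra | | lra].
          apply Rmult_le_compat_l; lra.
        * exact HP.
      + replace (1 * m ^ k * 1 * (rk n i 0 ^ t * E ^ k))
          with (rk n i 0 ^ t * y ^ k) by (unfold y; rewrite Rpow_mult_distr; ring).
        apply Rmult_le_compat_l; [lra|].
        unfold k. replace (x + 1)%nat with (S x) by lia. simpl.
        assert (y ^ x <= 1) by (rewrite <- (pow1 x); apply pow_incr; lra).
        nra.
    - rewrite sum_cte.
      replace (S (i - 1 - 1)) with (i - 1)%nat by lia. rewrite Hm.
      assert (0 <= rk n i 0 ^ t) by (apply pow_le; lra).
      fold m. nra. }
  rewrite !Rabs_mult.
  rewrite (Rabs_pos_eq (C n i)) by apply C_nonneg.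
  assert (Hf0 : / 2 <= (N - 2 * I + 1) / (N - I + 1)) by (apply my_le_div; lra).
  assert (Hr0t : 0 <= rk n i 0 ^ t) by (apply pow_le; lra).
  assert (HP : 0 <= Rabs (INR (a i) - INR (b i)) * C n i)
    by (apply Rmult_le_pos; [apply Rabs_pos | apply C_nonneg]).
  replace (/ 2 * Rabs (INR (a i) - INR (b i)) * C n i *
     ((N - 2 * I + 1) / (N - I + 1)) * rk n i 0 ^ t)
    with (Rabs (INR (a i) - INR (b i)) * C n i *
     (/ 2 * ((N - 2 * I + 1) / (N - I + 1)) * rk n i 0 ^ t)) by ring.
  apply Rmult_le_compat_l; [exact HP|].
  nra.
Qed.
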